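(* Let $f\in F$ and suppose that left-multiplying $f$ by $x_1$ creates a caret in the top forest (i.e. the new top caret joining the top trees $T_0,T_1$ of the reduced forest diagram of $f$ does not oppose a bottom caret). Then $\ell(x_1f)=\ell(f)\pm1$, and $\ell(x_1f)=\ell(f)-1$ if and only if the right space of $f$ has label pair $(R,R)$.
   Context: Thompson's group $F$ is realized as the group of all orientation-preserving piecewise-linear homeomorphisms $f$ of $\mathbb R$ with finitely many breakpoints, all breakpoints having dyadic rational coordinates, all slopes integral powers of $2$, and with $f(t)=t-m$ for all sufficiently negative $t$ and $f(t)=t-n$ for all sufficiently positive $t$, for some integers $m,n$. Products are compositions of functions: $fg=f\circ g$. The generators are $x_0(t)=t-1$ and $x_1(t)=t$ for $t\le 0$, $x_1(t)=t/2$ for $0\le t\le 2$, $x_1(t)=t-1$ for $t\ge 2$. A forest diagram for $x_1f$ is obtained from one for $f$ by attaching a new caret to the roots of the top trees $T_0,T_1$ and pointing the top pointer at the combined tree. Forest diagrams: a binary forest is a sequence $(T_i)_{i\in\mathbb Z}$ of finite rooted binary trees (every node has $0$ or $2$ children; internal nodes are called carets; a trivial tree is a single leaf), all but finitely many trivial, together with a pointer marking $T_0$. Tree $T_i$ represents the interval $[i,i+1]$, each caret represents halving the interval of its node, and the leaves of the forest give a dyadic subdivision of $\mathbb R$. A forest diagram for $f$ is a pair of binary forests, the bottom (domain) forest with subdivision $\mathcal D$ and the top (range) forest with subdivision $\mathcal R$, such that $f$ maps each interval of $\mathcal D$ linearly onto an interval of $\mathcal R$; this matches the leaves of the two forests by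 an order-preserving bijection, so the two forests share one linearly ordered set of leaves (columns). A reduction deletes an opposing pair of carets, i.e. a top caret and a bottom caret both of whose children are leaves and which have the same two (matched) leaves. A forest diagram is reduced if no reduction is possible; every element of $F$ has a unique reduced forest diagram. The support of a forest diagram is the smallest set of consecutive columns containing all leaves of nontrivial trees of either forest and the leaves of the two trees marked by the two pointers. A space is a gap between two consecutive columns; the spaces in the support are the gaps between consecutive columns of the support. The current tree of $f$ is the tree of the top forest (of the reduced diagram) marked by the top pointer; the right (resp. left) space of $f$ is the space immediately to the right (resp. left) of the current tree. Labels: in each of the two forests separately (using that forest's own pointer), a space is interior if the leaves on both sides of it belong to the same tree and exterior otherwise; it lies immediately to the left of a caret $c$ of that forest if the leaf immediately to its right is the leftmost leaf descending from $c$. Each space of the support receives a label in each forest: $L$ if it is exterior and to the left of the tree marked by the pointer; otherwise $N$ if it lies immediately to the left of some caret; otherwise $R$ if it is exterior (hence to the right of the marked tree); otherwise $I$ (interior). A space thus has a label pair (top label, bottom label); spaces outside the support are unlabeled. Weights, by (top, bottom): $(L,L)=2$, $(L,N)=1$, $(L,R)=1$, $(L,I)=1$; $(N,L)=1$, $(N,N)=2$, $(N,R)=2$, $(N,I)=2$; $(R,L)=1$, $(R,N)=2$, $(R,R)=2$, $(R,I)=0$; $(I,L)=1$, $(I,N)=2$, $(I,R)=0$, $(I,I)=0$. For $f\in F$, $\ell(f)=\ell_0(f)+\ell_1(f)$, where $\ell_0(f)$ is the sum of the weights of the spaces in the support of the reduced forest diagram of $f$ and $\ell_1(f)$ is its total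 number of carets; $\ell(f)$ equals the word length of $f$ with respect to $\{x_0,x_1\}$. *)

(* Defs.v *)
From mathcomp Require Import all_boot.
Set Implicit Arguments. Unset Strict Implicit. Unset Printing Implicit Defensive.

(* Finite rooted binary trees; internal nodes are carets. *)
Inductive tree := Leaf | Node of tree & tree.

Definition is_leaf (t : tree) : bool := if t is Leaf then true else false.

Fixpoint nleaves (t : tree) : nat :=
  match t with Leaf => 1 | Node l r => nleaves l + nleaves r end.

Fixpoint ncarets (t : tree) : nat :=
  match t with Leaf => 0 | Node l r => (ncarets l + ncarets r).+1 end.

(* For each leaf of t (left to right): is it the leftmost leaf descending
   from some caret of t? *)
Fixpoint lmflags (t : tree) : seq bool :=
  match t with
  | Leaf => [:: false]
  | Node l r => (true :: behead (lmflags l)) ++ lmflags r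
  end.

(* A binary forest, represented by a finite window [trees] of consecutive
   trees together with the index [ptr] of the tree marked by the pointer;
   all trees outside the window are trivial.  Columns (leaves) of the window
   are numbered 0, 1, ..., from left to right. *)
Record forest := Forest { trees : seq tree; ptr : nat }.

(* A forest diagram: top (range) forest and bottom (domain) forest over the
   same window of columns: column j of the top forest is matched with
   column j of the bottom forest (outside the window both forests are
   trivial and columns are matched in order). *)
Record fdiag := FDiag { top : forest; bot : forest }.

Definition ftree (F : forest) (i : nat) : tree := nth Leaf (trees F) i.

Definition nleavesF (F : forest) : nat := sumn (map nleaves (trees F)).
Definition ncaretsF (F : forest) : nat := sumn (map ncarets (trees F)).

Definition start (F : forest) (i : nat) : nat :=
  sumn (map nleaves (take i (trees F))).

Definition tree_idxs (F : forest) : seq nat := iota 0 (size (trees F)).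

Definition colmap (F : forest) : seq nat :=
  flatten [seq nseq (nleaves (ftree F i)) i | i <- tree_idxs F].

Definition lmcols (F : forest) : seq bool := flatten (map lmflags (trees F)).

Definition wf_diag (D : fdiag) : bool :=
  [&& ptr (top D) < size (trees (top D)),
      ptr (bot D) < size (trees (bot D)) &
      nleavesF (top D) == nleavesF (bot D)].

(* leftmost columns of the carets of t both of whose children are leaves;
   off = column of the leftmost leaf of t *)
Fixpoint simple_at (t : tree) (off : nat) : seq nat :=
  match t with
  | Leaf => [::]
  | Node Leaf Leaf => [:: off]
  | Node l r => simple_at l off ++ simple_at r (off + nleaves l)
  end.

Definition simpleF (F : forest) : seq nat :=
  flatten [seq simple_at (ftree F i) (start F i) | i <- tree_idxs F].

(* an opposing pair: a top and a bottom caret with the same two leaves *)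
Definition has_opposing_pair (D : fdiag) : bool :=
  has (fun c => c \in simpleF (bot D)) (simpleF (top D)).

Definition reduced (D : fdiag) : bool := ~~ has_opposing_pair D.

Fixpoint repl_tree (t : tree) (off c : nat) : tree :=
  match t with
  | Leaf => Leaf
  | Node Leaf Leaf => if off == c then Leaf else t
  | Node l r => Node (repl_tree l off c) (repl_tree r (off + nleaves l) c)
  end.

Definition repl_forest (F : forest) (c : nat) : forest :=
  Forest [seq repl_tree (ftree F i) (start F i) c | i <- tree_idxs F] (ptr F).

Definition reduce_step (D : fdiag) : option fdiag :=
  match [seq c <- simpleF (top D) | c \in simpleF (bot D)] with
  | [::] => None
  | c :: _ => Some (FDiag (repl_forest (top D) c) (repl_forest (bot D) c))
  end.

Fixpoint reduce_fuel (n : nat) (D : fdiag) : fdiag :=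
  match n with
  | 0 => D
  | n.+1 => match reduce_step D with
            | None => D
            | Some D' => reduce_fuel n D'
            end
  end.

(* full reduction (each step deletes two carets) *)
Definition reduce (D : fdiag) : fdiag :=
  reduce_fuel (ncaretsF (top D) + ncaretsF (bot D)).+1 D.

Definition join_at (s : seq tree) (k : nat) : seq tree :=
  take k s ++ Node (nth Leaf s k) (nth Leaf s k.+1) :: drop k.+2 s.

(* pad the window on the right by one trivial tree in each forest (so that
   T_1 lies in the window), then attach a new top caret to the roots of the
   top trees T_0, T_1 and point the top pointer at the combined tree *)
Definition x1_attach (D : fdiag) : fdiag :=
  FDiag (Forest (join_at (rcons (trees (top D)) Leaf) (ptr (top D))) (ptr (top D)))
        (Forest (rcons (trees (bot D)) Leaf) (ptr (bot D))).

(* the new top caret does not oppose a bottom caret: it opposes one iff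
   T_0, T_1 are trivial and the bottom forest has a caret with exactly
   those two leaves *)
Definition x1_creates_caret (D : fdiag) : bool :=
  let D' := x1_attach D in
  let p := ptr (top D) in
  ~~ [&& is_leaf (nth Leaf (rcons (trees (top D)) Leaf) p),
         is_leaf (nth Leaf (rcons (trees (top D)) Leaf) p.+1) &
         start (top D') p \in simpleF (bot D')].

Inductive label := lab_L | lab_N | lab_R | lab_I.

(* label, in forest F, of the space between columns j and j+1 *)
Definition label_of (F : forest) (j : nat) : label :=
  let a := nth 0 (colmap F) j in
  let b := nth 0 (colmap F) j.+1 in
  let exterior := a != b in
  if exterior && (b <= ptr F) then lab_L
  else if nth false (lmcols F) j.+1 then lab_N
  else if exterior then lab_R
  else lab_I.

Definition weight (t b : label) : nat :=
  match t, b with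
  | lab_L, lab_L => 2 | lab_L, lab_N => 1 | lab_L, lab_R => 1 | lab_L, lab_I => 1
  | lab_N, lab_L => 1 | lab_N, lab_N => 2 | lab_N, lab_R => 2 | lab_N, lab_I => 2
  | lab_R, lab_L => 1 | lab_R, lab_N => 2 | lab_R, lab_R => 2 | lab_R, lab_I => 0
  | lab_I, lab_L => 1 | lab_I, lab_N => 2 | lab_I, lab_R => 0 | lab_I, lab_I => 0
  end.

Definition relevant_tree_cols (F : forest) (i : nat) : seq nat :=
  if ~~ is_leaf (ftree F i) || (i == ptr F)
  then iota (start F i) (nleaves (ftree F i)) else [::].

Definition relevant_cols (D : fdiag) : seq nat :=
  flatten [seq relevant_tree_cols (top D) i | i <- tree_idxs (top D)] ++
  flatten [seq relevant_tree_cols (bot D) i | i <- tree_idxs (bot D)].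

(* the support is the set of columns supp_lo .. supp_hi *)
Definition supp_lo (D : fdiag) : nat :=
  foldr minn (head 0 (relevant_cols D)) (relevant_cols D).
Definition supp_hi (D : fdiag) : nat := foldr maxn 0 (relevant_cols D).

Definition support_spaces (D : fdiag) : seq nat :=
  iota (supp_lo D) (supp_hi D - supp_lo D).

Definition ell0 (D : fdiag) : nat :=
  sumn [seq weight (label_of (top D) j) (label_of (bot D) j)
       | j <- support_spaces D].

Definition ell1 (D : fdiag) : nat := ncaretsF (top D) + ncaretsF (bot D).

(* ell of a reduced forest diagram *)
Definition ell (D : fdiag) : nat := ell0 D + ell1 D.

(* the right space of the current tree (top tree marked by the top
   pointer): the space between its rightmost column and the next column *)
Definition right_space (D : fdiag) : nat :=
  (start (top D) (ptr (top D)) + nleaves (ftree (top D) (ptr (top D)))).-1.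

Definition label_pair (D : fdiag) (j : nat) : option (label * label) :=
  if (supp_lo D <= j) && (j < supp_hi D)
  then Some (label_of (top D) j, label_of (bot D) j) else None.

(* Main.v *)
Require Import Defs.
From mathcomp Require Import all_boot zify.
Set Implicit Arguments. Unset Strict Implicit. Unset Printing Implicit Defensive.


Definition nls (s : seq tree) := sumn (map nleaves s).

Fixpoint gflat (A : Type) (f : nat -> nat -> tree -> seq A) (k off : nat) (s : seq tree) : seq A :=
  match s with
  | [::] => [::]
  | t :: s' => f k off t ++ gflat f k.+1 (off + nleaves t) s'
  end.

Lemma nleaves_gt0 t : 0 < nleaves t.
Proof. elim: t => //= l IHl r IHr; lia. Qed.

Lemma nls_cat x y : nls (x ++ y) = nls x + nls y.
Proof. by rewrite /nls map_cat sumn_cat. Qed.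

Lemma nls_cons t x : nls (t :: x) = nleaves t + nls x.
Proof. by []. Qed.

Lemma gflatE_gen A (f : nat -> nat -> tree -> seq A) s pre :
  flatten [seq f i (sumn (map nleaves (take i (pre ++ s)))) (nth Leaf (pre ++ s) i)
          | i <- iota (size pre) (size s)] = gflat f (size pre) (nls pre) s.
Proof.
elim: s pre => [|t s IH] pre /=; first by [].
rewrite take_size_cat // nth_cat ltnn subnn /=; congr (_ ++ _).
have := IH (rcons pre t); rewrite size_rcons cat_rcons => ->.
by rewrite -cats1 nls_cat /nls /= addn0.
Qed.

Lemma gflatE A (f : nat -> nat -> tree -> seq A) s :
  flatten [seq f i (sumn (map nleaves (take i s))) (nth Leaf s i) | i <- iota 0 (size s)]
  = gflat f 0 0 s.
Proof. exact: (gflatE_gen f s [::]). Qed.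

Lemma gflat_cat A (f : nat -> nat -> tree -> seq A) k off x y :
  gflat f k off (x ++ y) = gflat f k off x ++ gflat f (k + size x) (off + nls x) y.
Proof.
elim: x k off => [|t x IH] k off /=; first by rewrite !addn0.
by rewrite IH catA addSnnS addnA.
Qed.

Definition cmf (k off : nat) (t : tree) := nseq (nleaves t) k.
Definition rlf (p : nat) (k off : nat) (t : tree) :=
  if ~~ is_leaf t || (k == p) then iota off (nleaves t) else [::].
Definition sff (k off : nat) (t : tree) := simple_at t off.
Definition lmff (k off : nat) (t : tree) := lmflags t.

Lemma colmapE F : colmap F = gflat cmf 0 0 (trees F).
Proof. exact: (gflatE cmf (trees F)). Qed.

Lemma relE F : flatten [seq relevant_tree_cols F i | i <- tree_idxs F] = gflat (rlf (ptr F)) 0 0 (trees F).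
Proof. exact: (gflatE (rlf (ptr F)) (trees F)). Qed.

Lemma simpleFE F : simpleF F = gflat sff 0 0 (trees F).
Proof. exact: (gflatE sff (trees F)). Qed.

Lemma lmcolsE F : lmcols F = gflat lmff 0 0 (trees F).
Proof.
rewrite /lmcols; have H : forall s k off, flatten (map lmflags s) = gflat lmff k off s.
  by elim=> [|t s IH] k off //=; rewrite (IH k.+1 (off + nleaves t)).
exact: H.
Qed.

Lemma startE F i : start F i = nls (take i (trees F)).
Proof. by []. Qed.

Lemma size_lmflags t : size (lmflags t) = nleaves t.
Proof.
elim: t => //= l IHl r IHr; rewrite size_cat /= size_behead IHl IHr.
have := nleaves_gt0 l; lia.
Qed.

Lemma size_gflat_cm k off s : size (gflat cmf k off s) = nls s.
Proof. elim: s k off => //= t s IH k off; by rewrite size_cat size_nseq IH. Qed.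

Lemma size_gflat_lm k off s : size (gflat lmff k off s) = nls s.
Proof. elim: s k off => //= t s IH k off; by rewrite size_cat size_lmflags IH. Qed.

Lemma gflat_cm_off k off off' s : gflat cmf k off s = gflat cmf k off' s.
Proof. elim: s k off off' => //= t s IH k off off'; by rewrite (IH _ _ (off' + nleaves t)). Qed.

Lemma gflat_cm_ge k off s x : x \in gflat cmf k off s -> k <= x.
Proof.
elim: s k off => //= t s IH k off; rewrite mem_cat => /orP [/nseqP [-> _] //|/IH]; lia.
Qed.

Lemma gflat_cm_lt k off s x : x \in gflat cmf k off s -> x < k + size s.
Proof.
elim: s k off => //= t s IH k off; rewrite mem_cat => /orP [/nseqP [-> _] |/IH]; lia.
Qed.

Lemma gflat_cm_S k off s : gflat cmf k.+1 off s = map succn (gflat cmf k off s).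
Proof. elim: s k off => //= t s IH k off; by rewrite map_cat IH /cmf map_nseq. Qed.

Lemma gflat_rl_ptr p k k' off s : p < k -> p < k' -> gflat (rlf p) k off s = gflat (rlf p) k' off s.
Proof.
elim: s k k' off => //= t s IH k k' off H1 H2.
rewrite (IH k.+1 k'.+1); [|lia|lia].
rewrite /rlf; have -> : (k == p) = false by lia.
by have -> : (k' == p) = false by lia.
Qed.

Lemma gflat_rl_range p k off s c : c \in gflat (rlf p) k off s -> off <= c < off + nls s.
Proof.
elim: s k off => //= t s IH k off; rewrite mem_cat /rlf => /orP [|/IH]; last by rewrite nls_cons; lia.
case: ifP => // _; rewrite mem_iota nls_cons; lia.
Qed.


Definition lab (a b p : nat) (f : bool) : label :=
  let exterior := a != b in
  if exterior && (b <= p) then lab_L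
  else if f then lab_N
  else if exterior then lab_R
  else lab_I.

Lemma label_ofE F j : label_of F j =
  lab (nth 0 (colmap F) j) (nth 0 (colmap F) j.+1) (ptr F) (nth false (lmcols F) j.+1).
Proof. by []. Qed.

Lemma lab_congr x y x' y' p f f' :
  (x' != y') = (x != y) -> ((x' != y') && (y' <= p)) = ((x != y) && (y <= p)) -> f' = f -> lab x' y' p f' = lab x y p f.
Proof. by rewrite /lab => -> -> ->. Qed.

Lemma gflat_lm k off s : gflat lmff k off s = flatten (map lmflags s).
Proof. by elim: s k off => //= t s IH k off; rewrite IH. Qed.

Lemma colmap_pad u q : colmap (Forest (rcons u Leaf) q) = colmap (Forest u q) ++ [:: size u].
Proof. by rewrite !colmapE /= -cats1 gflat_cat /= ?cats0 ?add0n. Qed.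

Lemma lmcols_pad u q : lmcols (Forest (rcons u Leaf) q) = lmcols (Forest u q) ++ [:: false].
Proof. by rewrite !lmcolsE /= -cats1 gflat_cat /= ?cats0 !gflat_lm. Qed.

Lemma label_pad u q j : j.+1 < nls u ->
  label_of (Forest (rcons u Leaf) q) j = label_of (Forest u q) j.
Proof.
move=> Hj; rewrite !label_ofE colmap_pad lmcols_pad.
have H1 : size (colmap (Forest u q)) = nls u by rewrite colmapE size_gflat_cm.
have H2 : size (lmcols (Forest u q)) = nls u by rewrite lmcolsE size_gflat_lm.
rewrite !nth_cat H1 H2 Hj.
by have -> : j < nls u by lia.
Qed.

Lemma rel_pad u q : q < size u -> gflat (rlf q) 0 0 (rcons u Leaf) = gflat (rlf q) 0 0 u.
Proof.
move=> Hq; rewrite -cats1 gflat_cat /= /rlf /=.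
have -> : (0 + size u == q) = false by lia.
by rewrite /= cats0.
Qed.

Lemma simple_pad u : gflat sff 0 0 (rcons u Leaf) = gflat sff 0 0 u.
Proof. by rewrite -cats1 gflat_cat /= ?cats0. Qed.

Definition ncs (s : seq tree) := sumn (map ncarets s).
Lemma ncs_cat x y : ncs (x ++ y) = ncs x + ncs y.
Proof. by rewrite /ncs map_cat sumn_cat. Qed.

Lemma blk (X Y : seq nat) na nb p c : (forall x, x \in X -> x < p) -> (forall y, y \in Y -> p.+2 <= y) ->
  c < size X + na + nb + size Y ->
  let v := nth 0 (X ++ nseq na p ++ nseq nb p.+1 ++ Y) c in
  [/\ c < size X -> v < p, size X <= c < size X + na -> v = p,
      size X + na <= c < size X + na + nb -> v = p.+1 & size X + na + nb <= c -> p.+2 <= v].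
Proof.
move=> HX HY Hc v; rewrite /v nth_cat; case: (ltnP c (size X)) => h1.
  split=> [h|h|h|h]; [by apply: HX; apply: mem_nth; change (c < @size nat X)|lia|lia|lia].
rewrite nth_cat size_nseq; case: (ltnP (c - size X) na) => h2.
  rewrite nth_nseq h2; split=> h; lia.
rewrite nth_cat size_nseq; case: (ltnP (c - size X - na) nb) => h3.
  rewrite nth_nseq h3; split=> h; lia.
split=> [h|h|h|_]; try lia.
apply: HY; apply: mem_nth; change (c - size X - na - nb < @size nat Y); lia.
Qed.

Lemma nth_cons_diff (T : Type) (d : T) X z z' m c : c != size X ->
  nth d (X ++ z :: m) c = nth d (X ++ z' :: m) c.
Proof.
move=> H; rewrite !nth_cat; case: ltnP => // h.
by case E: (c - size X) => [|k] //; lia.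
Qed.

Lemma lmflags_head t : nth false (lmflags t) 0 = ~~ is_leaf t.
Proof. by case: t. Qed.

Lemma map_fix (T : eqType) (f : T -> T) (s : seq T) : (forall x, x \in s -> f x = x) -> map f s = s.
Proof.
elim: s => //= x s IH H; rewrite H ?mem_head // IH // => y hy.
by apply: H; rewrite in_cons hy orbT.
Qed.

Definition gp (p x : nat) := if x <= p then x else x.-1.

Section Top.
Variables (s1 s3 : seq tree) (a b : tree).
Let p := size s1.
Let c1 := nls s1.
Let na := nleaves a.
Let nb := nleaves b.
Let FP := Forest (s1 ++ a :: b :: s3) p.
Let FJ := Forest (s1 ++ Node a b :: s3) p.

Lemma cmP : colmap FP = gflat cmf 0 0 s1 ++ nseq na p ++ nseq nb p.+1 ++ gflat cmf p.+2 0 s3.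
Proof.
rewrite colmapE /= gflat_cat /= /cmf -/p -/na -/nb add0n; congr (_ ++ _ ++ _ ++ _).
exact: gflat_cm_off.
Qed.

Lemma cmJ c : nth 0 (colmap FJ) c = gp p (nth 0 (colmap FP) c).
Proof.
have -> : colmap FJ = map (gp p) (colmap FP).
  rewrite cmP colmapE /= gflat_cat /= add0n !map_cat !map_nseq.
  have -> : gp p p = p by rewrite /gp leqnn.
  have -> : gp p p.+1 = p by rewrite /gp ltnn.
  rewrite -/p.
  have -> : cmf p (0 + nls s1) (Node a b) = nseq na p ++ nseq nb p by rewrite /cmf /= nseqD.
  rewrite -catA; congr (_ ++ _ ++ _ ++ _).
  - symmetry; apply: map_fix => x /gflat_cm_lt; rewrite add0n -/p /gp => h; rewrite ifT //; lia.
  - rewrite (gflat_cm_off _ _ 0) [in RHS]gflat_cm_S -map_comp; symmetry; apply: map_fix => x /= h.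
    have := gflat_cm_ge h; rewrite /gp => h'.
    by rewrite ifF //; lia.
case: (ltnP c (size (colmap FP))) => h; first by rewrite (nth_map 0).
by rewrite !nth_default ?size_map.
Qed.

Lemma lmP : lmcols FP = flatten (map lmflags s1) ++ lmflags a ++ lmflags b ++ flatten (map lmflags s3).
Proof. by rewrite lmcolsE /= gflat_cat /= !gflat_lm. Qed.

Lemma lmJ : lmcols FJ = flatten (map lmflags s1) ++ (true :: behead (lmflags a)) ++ lmflags b ++ flatten (map lmflags s3).
Proof. by rewrite lmcolsE /= gflat_cat /= !gflat_lm -!catA. Qed.

Lemma lmJP c : c != c1 -> nth false (lmcols FJ) c = nth false (lmcols FP) c.
Proof.
move=> H; rewrite lmJ lmP.
have : size (lmflags a) = na by rewrite size_lmflags.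
case: (lmflags a) => [|z la] /=; first by have := nleaves_gt0 a; lia.
move=> _; rewrite /= (nth_cons_diff _ _ z) //.
suff -> : size (flatten (map lmflags s1)) = c1 by [].
by rewrite -(gflat_lm 0 0) size_gflat_lm.
Qed.

Lemma sizeX : size (gflat cmf 0 0 s1) = c1. Proof. exact: size_gflat_cm. Qed.

Lemma top_lab j : j != (c1 + na).-1 -> j.+1 < nls (s1 ++ a :: b :: s3) ->
  label_of FJ j = label_of FP j.
Proof.
move=> Hr Hj; rewrite !label_ofE !cmJ.
have HX : forall x, x \in gflat cmf 0 0 s1 -> x < p by move=> x /gflat_cm_lt.
have HY : forall y, y \in gflat cmf p.+2 0 s3 -> p.+2 <= y by move=> y /gflat_cm_ge.
have Hsz : nls (s1 ++ a :: b :: s3) = size (gflat cmf 0 0 s1) + na + nb + size (gflat cmf p.+2 0 s3).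
  by rewrite nls_cat !nls_cons !size_gflat_cm; lia.
rewrite Hsz sizeX in Hj.
have := @blk _ _ na nb p j HX HY; rewrite sizeX -cmP => /(_ ltac:(lia)) [x1 x2 x3 x4].
have := @blk _ _ na nb p j.+1 HX HY; rewrite sizeX -cmP => /(_ ltac:(lia)) [y1 y2 y3 y4].
have ha := nleaves_gt0 a; have hb := nleaves_gt0 b.
set x := nth 0 _ j in x1 x2 x3 x4 *; set y := nth 0 _ j.+1 in y1 y2 y3 y4 *.
rewrite /= /gp.
case: (ltnP j.+1 c1) => h1.
  have := x1 ltac:(lia); have := y1 ltac:(lia) => hy hx.
  rewrite ifT; last lia. rewrite ifT; last lia.
  by apply: lab_congr => //; apply: lmJP; lia.
case: (eqVneq j.+1 c1) => h2.
  have := x1 ltac:(lia); have := y2 ltac:(lia) => hy hx.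
  rewrite ifT; last lia. rewrite ifT; last lia.
  rewrite /lab; have -> : (x != y) && (y <= p) = true by lia. by [].
case: (ltnP j.+1 (c1 + na)) => h3.
  have := x2 ltac:(lia); have := y2 ltac:(lia) => hy hx.
  rewrite ifT; last lia. rewrite ifT; last lia.
  by apply: lab_congr => //; apply: lmJP; lia.
case: (ltnP j.+1 (c1 + na + nb)) => h4.
  have := x3 ltac:(lia); have := y3 ltac:(lia) => hy hx.
  rewrite ifF; last lia. rewrite ifF; last lia.
  by apply: lab_congr; [lia|lia|apply: lmJP; lia].
case: (eqVneq j.+1 (c1 + na + nb)) => h5.
  have := x3 ltac:(lia); have := y4 ltac:(lia) => hy hx.
  rewrite ifF; last lia. rewrite ifF; last lia.
  by apply: lab_congr; [lia|lia|apply: lmJP; lia].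
have := x4 ltac:(lia); have := y4 ltac:(lia) => hy hx.
rewrite ifF; last lia. rewrite ifF; last lia.
by apply: lab_congr; [lia|lia|apply: lmJP; lia].
Qed.

Lemma top_lab_r : label_of FP (c1 + na).-1 = (if is_leaf b then lab_R else lab_N) /\
                  label_of FJ (c1 + na).-1 = (if is_leaf b then lab_I else lab_N).
Proof.
have HX : forall x, x \in gflat cmf 0 0 s1 -> x < p by move=> x /gflat_cm_lt.
have HY : forall y, y \in gflat cmf p.+2 0 s3 -> p.+2 <= y by move=> y /gflat_cm_ge.
have ha := nleaves_gt0 a; have hb := nleaves_gt0 b.
have := @blk _ _ na nb p (c1 + na).-1 HX HY; rewrite sizeX -cmP => /(_ ltac:(lia)) [x1 x2 x3 x4].
have := @blk _ _ na nb p ((c1 + na).-1).+1 HX HY; rewrite sizeX -cmP => /(_ ltac:(lia)) [y1 y2 y3 y4].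
have hx := x2 ltac:(lia); have hy := y3 ltac:(lia).
have hLX : size (flatten (map lmflags s1)) = c1 by rewrite -(gflat_lm 0 0) size_gflat_lm.
have hlb : forall m, nth false (lmflags b ++ m) 0 = ~~ is_leaf b.
  by move=> m; rewrite nth_cat size_lmflags ifT ?lmflags_head.
have e1 : ((c1 + na).-1).+1 = c1 + na by lia.
have fP : nth false (lmcols FP) ((c1 + na).-1).+1 = ~~ is_leaf b.
  rewrite lmP nth_cat hLX e1 ifF; last lia.
  rewrite nth_cat size_lmflags -/na ifF; last lia.
  by have -> : c1 + na - c1 - na = 0 by lia.
have fJ : nth false (lmcols FJ) ((c1 + na).-1).+1 = ~~ is_leaf b.
  rewrite lmJ nth_cat hLX e1 ifF; last lia.
  have hs : size (true :: behead (lmflags a)) = na by rewrite /= size_behead size_lmflags; lia.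
  rewrite nth_cat hs ifF; last lia.
  by have -> : c1 + na - c1 - na = 0 by lia.
split; rewrite label_ofE ?fP ?fJ.
  rewrite hx hy /lab; have -> : (p != p.+1) by lia.
  by rewrite ltnn /=; case: (is_leaf b).
rewrite !cmJ hx hy /gp leqnn ltnn /lab eqxx /=.
by case: (is_leaf b).
Qed.
End Top.


Lemma fmax_ge (s : seq nat) x : x \in s -> x <= foldr maxn 0 s.
Proof. elim: s => //= y s IH; rewrite in_cons => /orP [/eqP ->|/IH]; lia. Qed.

Lemma fmax_mem (s : seq nat) : s != [::] -> foldr maxn 0 s \in s.
Proof.
elim: s => //= y s IH _; rewrite in_cons.
case: s IH => [|z s] IH /=; first by rewrite maxn0 eqxx.
have := IH isT; rewrite /=; set m := maxn z _ => h.
have [->|->] : maxn y m = y \/ maxn y m = m by lia.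
  by rewrite eqxx.
by rewrite h orbT.
Qed.

Lemma fmin_le_gen (s : seq nat) d x : x \in s -> foldr minn d s <= x.
Proof. elim: s => //= y s IH; rewrite in_cons => /orP [/eqP ->|/IH]; lia. Qed.

Lemma fmin_mem_gen (s : seq nat) d : foldr minn d s \in d :: s.
Proof.
elim: s => [|y s IH] /=; first by rewrite mem_head.
move: IH; rewrite !in_cons; set m := foldr minn d s => h.
have [->|->] : minn y m = y \/ minn y m = m by lia.
  by rewrite eqxx orbT.
by case/orP: h => ->; rewrite ?orbT.
Qed.

Lemma fmin_mem (s : seq nat) : s != [::] -> foldr minn (head 0 s) s \in s.
Proof.
case: s => //= y s _; have := fmin_mem_gen (y :: s) y.
by rewrite in_cons => /orP [/eqP /= ->|//]; rewrite mem_head.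
Qed.

Lemma fmin_eq (s1 s2 : seq nat) : s1 != [::] -> s2 != [::] -> s1 =i s2 ->
  foldr minn (head 0 s1) s1 = foldr minn (head 0 s2) s2.
Proof.
move=> h1 h2 E; apply/eqP; rewrite eqn_leq; apply/andP; split.
  by apply: fmin_le_gen; rewrite E; apply: fmin_mem.
by apply: fmin_le_gen; rewrite -E; apply: fmin_mem.
Qed.

Lemma sum_iota_eq (f g : nat -> nat) lo n :
  (forall j, lo <= j < lo + n -> f j = g j) -> sumn (map f (iota lo n)) = sumn (map g (iota lo n)).
Proof. by move=> H; congr sumn; apply/eq_in_map => j; rewrite mem_iota => /H. Qed.

Lemma sum_iota_diff (f g : nat -> nat) lo n r : lo <= r < lo + n ->
  (forall j, lo <= j < lo + n -> j != r -> f j = g j) ->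
  sumn (map f (iota lo n)) + g r = sumn (map g (iota lo n)) + f r.
Proof.
elim: n lo => [|n IH] lo hr H; first lia.
rewrite /= -!addnA.
case: (eqVneq lo r) => e.
  subst; rewrite (@sum_iota_eq f g r.+1 n); first lia.
  move=> j hj; apply: H; lia.
rewrite H //; last lia.
have := IH lo.+1 ltac:(lia) (fun j hj => H j ltac:(lia)); lia.
Qed.

Lemma sum_iota_last (f : nat -> nat) lo n :
  sumn (map f (iota lo n.+1)) = sumn (map f (iota lo n)) + f (lo + n).
Proof. by rewrite -addn1 iotaD map_cat sumn_cat /= addn0. Qed.

Lemma split_col (v : seq tree) c : c < nls v ->
  exists v1 t v2, v = v1 ++ t :: v2 /\ nls v1 <= c < nls v1 + nleaves t.
Proof.
elim: v c => [|t v IH] c //= hc.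
case: (ltnP c (nleaves t)) => h.
  by exists [::], t, v; split=> //=; lia.
have [v1 [t' [v2 [E h2]]]] := IH (c - nleaves t) (ltac:(rewrite /nls /= in hc; rewrite /nls; lia)).
exists (t :: v1), t', v2; rewrite E; split=> //; rewrite nls_cons; lia.
Qed.

Lemma rel_at q k off x t y : ~~ is_leaf t || (k + size x == q) ->
  {subset iota (off + nls x) (nleaves t) <= gflat (rlf q) k off (x ++ t :: y)}.
Proof.
move=> h c hc; rewrite gflat_cat mem_cat /= mem_cat /rlf h hc.
by rewrite orbT.
Qed.

Lemma colmap_at v1 t v2 q c : nls v1 <= c < nls v1 + nleaves t ->
  nth 0 (colmap (Forest (v1 ++ t :: v2) q)) c = size v1.
Proof.
move=> h; rewrite colmapE /= gflat_cat nth_cat size_gflat_cm ifF; last lia.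
by rewrite /= nth_cat /cmf size_nseq ifT ?nth_nseq ?ifT ?add0n //; lia.
Qed.

Lemma lmcols_at v1 t v2 q c : nls v1 <= c < nls v1 + nleaves t ->
  nth false (lmcols (Forest (v1 ++ t :: v2) q)) c = nth false (lmflags t) (c - nls v1).
Proof.
move=> h; rewrite lmcolsE /= gflat_cat nth_cat size_gflat_lm ifF; last lia.
by rewrite /= nth_cat size_lmflags ifT //; lia.
Qed.

Lemma lm_leaf t k : is_leaf t -> nth false (lmflags t) k = false.
Proof. case: t => [|l r] // _; case: k => // n; by rewrite /= nth_nil. Qed.

Lemma beyond (v : seq tree) q c : q < size v -> c < nls v ->
  (forall x, x \in gflat (rlf q) 0 0 v -> x < c) ->
  q < nth 0 (colmap (Forest v q)) c /\ nth false (lmcols (Forest v q)) c = false.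
Proof.
move=> hq hc hall.
have [v1 [t [v2 [E h]]]] := split_col hc.
have notrel : ~~ (~~ is_leaf t || (0 + size v1 == q)).
  apply/negP => /(@rel_at q 0 0 v1 t v2) /(_ c); rewrite -E add0n => H.
  have := hall c (H ltac:(rewrite mem_iota; lia)); lia.
move: notrel; rewrite negb_or negbK add0n => /andP [lt nq].
rewrite E colmap_at // lmcols_at //; split; last by apply: lm_leaf.
case: (ltnP q (size v1)) => // hq1.
have hq2 : size v1 < q by lia.
(* the pointer tree lies to the right of column c *)
have E2 : v = take q v ++ nth Leaf v q :: drop q.+1 v by rewrite -drop_nth // cat_take_drop.
have := @rel_at q 0 0 (take q v) (nth Leaf v q) (drop q.+1 v).
rewrite add0n size_take hq eqxx orbT -E2 => /(_ isT (nls (take q v))).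
rewrite mem_iota => /(_ ltac:(have := nleaves_gt0 (nth Leaf v q); lia)) /hall.
have : nls v1 + nleaves t <= nls (take q v).
  rewrite E take_cat ifF; last lia.
  case: (q - size v1) (ltac:(lia) : 0 < q - size v1) => [//|k] _.
  by rewrite /= nls_cat nls_cons; lia.
lia.
Qed.


Lemma join_at_eq s1 a b s3 : join_at (s1 ++ a :: b :: s3) (size s1) = s1 ++ Node a b :: s3.
Proof.
rewrite /join_at take_size_cat // !nth_cat ltnn subnn.
have -> : (size s1).+1 < size s1 = false by lia.
rewrite subSnn drop_cat.
have -> : (size s1).+2 < size s1 = false by lia.
have -> : (size s1).+2 - size s1 = 2 by lia.
by rewrite /= drop0.
Qed.

Lemma simple_node a b off : simple_at (Node a b) off =
  if is_leaf a && is_leaf b then [:: off] else simple_at a off ++ simple_at b (off + nleaves a).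
Proof. by case: a => [|? ?]; case: b => [|? ?]. Qed.

Lemma gflat_sf_k k k' off s : gflat sff k off s = gflat sff k' off s.
Proof. by elim: s k k' off => //= t s IH k k' off; rewrite (IH _ k'.+1). Qed.

Lemma sf_pad k off s : gflat sff k off (rcons s Leaf) = gflat sff k off s.
Proof. by rewrite -cats1 gflat_cat /= ?cats0. Qed.

Lemma rl_pad q k off s : k + size s != q -> gflat (rlf q) k off (rcons s Leaf) = gflat (rlf q) k off s.
Proof. move=> h; rewrite -cats1 gflat_cat /= /rlf /= (negbTE h) /=; apply: cats0. Qed.

Lemma ncs_rcons s : ncs (rcons s Leaf) = ncs s.
Proof. rewrite -cats1 ncs_cat; change (ncs [:: Leaf]) with 0; apply: addn0. Qed.

Section Rel.
Variables (s1 s2 s3 : seq tree) (a b : tree).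
Hypothesis E : rcons s2 Leaf = b :: s3.
Let p := size s1.
Let c1 := nls s1.
Let na := nleaves a.
Let nb := nleaves b.

Lemma rel_old : gflat (rlf p) 0 0 (s1 ++ a :: s2) =
  gflat (rlf p) 0 0 s1 ++ iota c1 na ++ (if is_leaf b then [::] else iota (c1 + na) nb)
  ++ gflat (rlf p) p.+2 (c1 + na + nb) s3.
Proof.
rewrite gflat_cat /= add0n {2}/rlf eqxx orbT -/p -/c1 -/na; congr (_ ++ _ ++ _).
rewrite -rl_pad; last lia.
rewrite E /= {1}/rlf; have -> : (p.+1 == p) = false by lia.
by rewrite orbF -/nb; case: (is_leaf b).
Qed.

Lemma rel_new : gflat (rlf p) 0 0 (s1 ++ Node a b :: s3) =
  gflat (rlf p) 0 0 s1 ++ iota c1 na ++ iota (c1 + na) nb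
  ++ gflat (rlf p) p.+2 (c1 + na + nb) s3.
Proof.
rewrite gflat_cat /= (@gflat_rl_ptr p p.+1 p.+2); [|lia|lia].
rewrite /rlf eqxx orbT !add0n -/(rlf p).
change (nleaves (Node a b)) with (na + nb).
by rewrite iotaD -catA addnA.
Qed.
End Rel.


Lemma leaf_nleaves t : is_leaf t -> nleaves t = 1.
Proof. by case: t. Qed.

Ltac slia := repeat match goal with H : ?T |- _ =>
  lazymatch T with
  | is_true (leq _ _) => fail
  | is_true (andb _ _) => fail
  | is_true (negb _) => fail
  | @eq nat _ _ => fail
  | _ => clear H
  end end; lia.

Lemma gflat_cons (A : Type) (f : nat -> nat -> tree -> seq A) k off t s :
  gflat f k off (t :: s) = f k off t ++ gflat f k.+1 (off + nleaves t) s.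
Proof. by []. Qed.

Theorem proposition4p3p6 (D : fdiag) :
  wf_diag D -> reduced D -> x1_creates_caret D ->
  (ell (reduce (x1_attach D)) = (ell D).+1 \/ (ell (reduce (x1_attach D))).+1 = ell D) /\
  ((ell (reduce (x1_attach D))).+1 = ell D <->
   label_pair D (right_space D) = Some (lab_R, lab_R)).
Proof.
move: D => [[s p] [u q]]; rewrite /wf_diag /= => /and3P [Hp Hq /eqP HN] red cc.
have [s1 [a [s2 [Es Hs1]]]] : exists s1 a s2, s = s1 ++ a :: s2 /\ size s1 = p.
  exists (take p s), (nth Leaf s p), (drop p.+1 s).
  by rewrite -drop_nth // cat_take_drop size_take Hp.
subst s p.
case E: (rcons s2 Leaf) => [|b s3]; first by case: s2 {Hp HN red cc} E.
have Hpad : rcons (s1 ++ a :: s2) Leaf = s1 ++ a :: b :: s3 by rewrite rcons_cat /= E.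
have HX : x1_attach (FDiag (Forest (s1 ++ a :: s2) (size s1)) (Forest u q)) =
  FDiag (Forest (s1 ++ Node a b :: s3) (size s1)) (Forest (rcons u Leaf) q).
  by rewrite /x1_attach /= Hpad join_at_eq.
have cc' : ~~ [&& is_leaf a, is_leaf b & nls s1 \in gflat sff 0 0 u].
  move: cc; rewrite /x1_creates_caret HX /= Hpad !nth_cat ltnn subnn.
  have -> : (size s1).+1 < size s1 = false by lia.
  by rewrite subSnn /start /= take_size_cat // simpleFE /= sf_pad.
rewrite HX.
set D0 := FDiag _ _ in red *.
set D' := FDiag _ _.
have Hred : reduce D' = D'.
  have Hf : [seq c <- simpleF (Forest (s1 ++ Node a b :: s3) (size s1)) | c \in simpleF (Forest (rcons u Leaf) q)] = [::].
    apply/eqP; rewrite -[_ == _]negbK -has_filter; apply/hasPn => c.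
    rewrite !simpleFE [trees _]/= [trees _]/= sf_pad gflat_cat mem_cat gflat_cons /sff simple_node -/sff.
    move: red; rewrite /reduced /has_opposing_pair !simpleFE [trees _]/= [trees _]/= => /hasPn red.
    have Hold : forall c, c \in gflat sff 0 0 (s1 ++ a :: s2) -> c \notin gflat sff 0 0 u by [].
    rewrite gflat_cat gflat_cons -(sf_pad _ _ s2) E gflat_cons in Hold.
    case/orP => [h|].
      by apply: Hold; rewrite mem_cat h.
    rewrite mem_cat; case/orP => [|h].
      case: ifP => [/andP [la lb]|_].
        rewrite inE => /eqP ->; move: cc'; rewrite la lb add0n; exact.
      rewrite mem_cat => /orP [h|h]; apply: Hold; rewrite !mem_cat /sff ?h ?orbT //.
    apply: Hold; rewrite !mem_cat.
    rewrite (gflat_sf_k _ (size s1).+2) in h.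
    by rewrite -!addnA h !orbT.
  by rewrite /reduce /= /reduce_step Hf.
rewrite Hred.
have HNN : nls (s1 ++ a :: s2) = nls u := HN.
set N := nls (s1 ++ a :: s2) in HNN.
have HNP : nls (s1 ++ a :: b :: s3) = N.+1.
  by rewrite -Hpad -cats1 nls_cat /N; change (nls [:: Leaf]) with 1; slia.
have hna := nleaves_gt0 a; have hnb := nleaves_gt0 b.
have Hc1na : nls s1 + nleaves a <= N by rewrite /N nls_cat nls_cons; slia.
have Hc1nab : nls s1 + nleaves a + nleaves b <= N.+1 by rewrite -HNP nls_cat !nls_cons; slia.
have RO : relevant_cols D0 = gflat (rlf (size s1)) 0 0 (s1 ++ a :: s2) ++ gflat (rlf q) 0 0 u.
  by rewrite /relevant_cols !relE.
have RN : relevant_cols D' = gflat (rlf (size s1)) 0 0 (s1 ++ Node a b :: s3) ++ gflat (rlf q) 0 0 u.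
  by rewrite /relevant_cols !relE /= rel_pad.
have Rlt : forall x, x \in relevant_cols D0 -> x < N.
  move=> x; rewrite RO mem_cat; case/orP => /gflat_rl_range; slia.
rewrite (@rel_old s1 s2 s3 a b E) in RO; rewrite rel_new in RN.
have Rmem : relevant_cols D' =i relevant_cols D0 ++ iota (nls s1 + nleaves a) (nleaves b).
  move=> x; rewrite RN RO !mem_cat; case: (is_leaf b); rewrite ?in_nil /=;
  by do !case: (x \in _).
have Rin_r : (nls s1 + nleaves a).-1 \in relevant_cols D0.
  rewrite RO !mem_cat mem_iota.
  have -> : (nls s1 <= (nls s1 + nleaves a).-1 < nls s1 + nleaves a) = true by slia.
  by rewrite orbT.
have Rin_c1 : nls s1 \in relevant_cols D0.
  rewrite RO !mem_cat mem_iota.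
  have -> : (nls s1 <= nls s1 < nls s1 + nleaves a) = true by slia.
  by rewrite orbT.
have Rin_b : ~~ is_leaf b -> (nls s1 + nleaves a + nleaves b).-1 \in relevant_cols D0.
  move=> nb; rewrite RO !mem_cat (negbTE nb) /= !mem_iota.
  have -> : (nls s1 + nleaves a <= (nls s1 + nleaves a + nleaves b).-1 < nls s1 + nleaves a + nleaves b) = true by slia.
  by rewrite !orbT.
have Rne : relevant_cols D0 != [::] by case: (relevant_cols D0) Rin_c1.
have RNne : relevant_cols D' != [::].
  by case E': (relevant_cols D') (Rmem (nls s1)) => [|? ?] //; rewrite mem_cat Rin_c1.
set lo := supp_lo D0; set hi := supp_hi D0.
have Hhi_mem : hi \in relevant_cols D0 by apply: fmax_mem.
have Hlo_le : lo <= nls s1 by apply: fmin_le_gen.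
have Hr_hi : (nls s1 + nleaves a).-1 <= hi by apply: fmax_ge.
have HhiN : hi < N by apply: Rlt.
have Hlo' : supp_lo D' = lo.
  apply/eqP; rewrite eqn_leq; apply/andP; split.
    apply: fmin_le_gen; rewrite Rmem mem_cat fmin_mem //.
  have := fmin_mem RNne; rewrite Rmem mem_cat => /orP [h|].
    by apply: fmin_le_gen.
  rewrite mem_iota => h; have h' : (nls s1 + nleaves a <= supp_lo D' < nls s1 + nleaves a + nleaves b) := h; slia.
have Hhi' : supp_hi D' = maxn hi (nls s1 + nleaves a + nleaves b).-1.
  apply/eqP; rewrite eqn_leq; apply/andP; split.
    have := fmax_mem RNne; rewrite Rmem mem_cat => /orP [/fmax_ge h|].
      have h' : supp_hi D' <= hi := h; slia.
    rewrite mem_iota => h; have h' : (nls s1 + nleaves a <= supp_hi D' < nls s1 + nleaves a + nleaves b) := h; slia.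
  rewrite geq_max; apply/andP; split; apply: fmax_ge; rewrite Rmem mem_cat ?Hhi_mem //.
  by rewrite mem_iota; apply/orP; right; slia.
pose FP := Forest (s1 ++ [:: a, b & s3]) (size s1).
pose FJ := Forest (s1 ++ Node a b :: s3) (size s1).
pose Bp := Forest (rcons u Leaf) q.
have Ltop : forall j, j.+1 < N -> label_of (Forest (s1 ++ a :: s2) (size s1)) j = label_of FP j.
  by move=> j hj; rewrite /FP -Hpad label_pad.
have Lbot : forall j, j.+1 < N -> label_of (Forest u q) j = label_of Bp j.
  by move=> j hj; rewrite /Bp label_pad // -HNN.
have Ltj : forall j, j != (nls s1 + nleaves a).-1 -> j.+1 < N.+1 -> label_of FJ j = label_of FP j.
  by move=> j h1 h2; apply: top_lab => //; rewrite HNP.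
have [tr1 tr2] := top_lab_r s1 s3 a b.
pose h j := weight (label_of FP j) (label_of Bp j).
pose h' j := weight (label_of FJ j) (label_of Bp j).
have E0 : ell0 D0 = sumn (map h (iota lo (hi - lo))).
  rewrite /ell0 /support_spaces -/lo -/hi; apply: sum_iota_eq => j hj.
  rewrite /h /= Ltop ?Lbot //; slia.
have E0' : ell0 D' = sumn (map h' (iota lo (maxn hi (nls s1 + nleaves a + nleaves b).-1 - lo))).
  by rewrite /ell0 /support_spaces Hlo' Hhi'.
have E1 : ell1 D' = (ell1 D0).+1.
  rewrite /ell1 /ncaretsF /=.
  change (sumn (map ncarets (s1 ++ Node a b :: s3))) with (ncs (s1 ++ Node a b :: s3)).
  change (sumn (map ncarets (s1 ++ a :: s2))) with (ncs (s1 ++ a :: s2)).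
  change (sumn (map ncarets (rcons u Leaf))) with (ncs (rcons u Leaf)).
  change (sumn (map ncarets u)) with (ncs u).
  rewrite !ncs_cat ncs_rcons.
  have : ncs (rcons s2 Leaf) = ncs (b :: s3) by rewrite E.
  rewrite ncs_rcons => H2.
  rewrite /ncs /= in H2 *; slia.
have Hrs : right_space D0 = (nls s1 + nleaves a).-1.
  by rewrite /right_space /start /ftree /= take_size_cat // nth_cat ltnn subnn.
rewrite /ell E0 E0' E1 Hrs /label_pair -/lo -/hi.
set r := (nls s1 + nleaves a).-1 in Ltj tr1 tr2 Hr_hi Rin_r Hrs *.
have hr1 : r.+1 = nls s1 + nleaves a by rewrite /r; slia.
case: (boolP (is_leaf b)) => lb; last first.
  have hb : (nls s1 + nleaves a + nleaves b).-1 <= hi := fmax_ge (Rin_b lb).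
  have -> : maxn hi (nls s1 + nleaves a + nleaves b).-1 = hi by slia.
  have -> : sumn (map h' (iota lo (hi - lo))) = sumn (map h (iota lo (hi - lo))).
    apply: sum_iota_eq => j hj; rewrite /h /h'.
    case: (eqVneq j r) => [->|hjr]; first by rewrite tr1 tr2 (negbTE lb).
    rewrite Ltj //; slia.
  have -> : (lo <= r) && (r < hi) = true by slia.
  rewrite Ltop; last slia.
  rewrite tr1 (negbTE lb); split; [left; slia|split => //; slia].
case: (ltnP r hi) => hrh.
  have -> : maxn hi (nls s1 + nleaves a + nleaves b).-1 = hi.
    have := leaf_nleaves lb; slia.
  have := @sum_iota_diff h' h lo (hi - lo) r ltac:(slia).
  have hneq : forall j, lo <= j < lo + (hi - lo) -> j != r -> h' j = h j.
    move=> j hj hjr; rewrite /h /h' Ltj //; slia.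
  move=> /(_ hneq); rewrite /h /h' tr1 tr2 lb.
  have -> : (lo <= r) = true by slia.
  rewrite Ltop ?Lbot; try slia.
  rewrite tr1 lb.
  case: (label_of Bp r) => /= H; split; try (by left; slia); try (by right; slia);
    split => // HH; slia.
have hhi : hi = r by slia.
have hnb1 := leaf_nleaves lb.
have -> : maxn hi (nls s1 + nleaves a + nleaves b).-1 - lo = (hi - lo).+1 by slia.
rewrite sum_iota_last.
have -> : lo + (hi - lo) = r by slia.
have -> : sumn (map h' (iota lo (hi - lo))) = sumn (map h (iota lo (hi - lo))).
  apply: sum_iota_eq => j hj; rewrite /h /h' Ltj //; slia.
have Hall : forall x, x \in gflat (rlf q) 0 0 (rcons u Leaf) -> x < r.+1.
  move=> x; rewrite rel_pad // => hx.
  have : x \in relevant_cols D0 by rewrite RO mem_cat hx orbT.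
  move/fmax_ge => hx'; have : x <= hi := hx'; slia.
have Hs1 : q < size (rcons u Leaf) by rewrite size_rcons; slia.
have Hs2 : r.+1 < nls (rcons u Leaf).
  rewrite -cats1 nls_cat -HNN; change (nls [:: Leaf]) with 1; slia.
have [hq1 hq2] := beyond Hs1 Hs2 Hall.
have -> : h' r = 0.
  rewrite /h' tr2 lb /= label_ofE /lab /Bp /= hq2.
  have -> : (nth 0 (colmap (Forest (rcons u Leaf) q)) r.+1 <= q) = false by slia.
  by rewrite andbF; case: (_ != _).
rewrite andbF.
split; first by left; slia.
split => // HH; slia.
Qed.
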